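(* Let $\mathfrak g$ be a finite-dimensional complex simple Lie algebra, $\lambda\in P^+$, and $\boldsymbol\lambda=(\lambda_1,\lambda_2)$, $\boldsymbol\mu=(\mu_1,\mu_2)\in P^+(\lambda,2)$. Then the following are equivalent: (a) $\boldsymbol\lambda\preceq\boldsymbol\mu$; (b) $(\lambda_1-\mu_1)(h_\alpha)\,(\mu_1-\lambda_2)(h_\alpha)\ge0$ for all $\alpha\in R^+$; (c) $(\lambda_1-\mu_1)(h_\alpha)\,(\mu_1-\lambda_2)(h_\alpha)\ge0$ for all $\alpha\in R$. Moreover, if $w\in W$ is such that $w(\lambda_1-\lambda_2)\in P^+$, then $\boldsymbol\lambda\preceq\boldsymbol\mu$ if and only if both $w(\lambda_1-\mu_1)\in P^+$ and $w(\mu_1-\lambda_2)\in P^+$.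
   Context: $\mathfrak g$ has Cartan subalgebra $\mathfrak h$, roots $R$, positive roots $R^+$, coroots $h_\alpha$ for $\alpha\in R^+$ with $h_{-\alpha}=-h_\alpha$, Weyl group $W$ (acting on weights), $P^+$ the dominant integral weights. $P^+(\lambda,2)=\{(\lambda_1,\lambda_2)\in(P^+)^2:\lambda_1+\lambda_2=\lambda\}$, and $(\lambda_1,\lambda_2)\preceq(\mu_1,\mu_2)$ means $\min\{\lambda_1(h_\alpha),\lambda_2(h_\alpha)\}\le\min\{\mu_1(h_\alpha),\mu_2(h_\alpha)\}$ for all $\alpha\in R^+$. *)

(* Defs.v *)
(* Abstract (reduced, crystallographic, irreducible) root
   system of a finite-dimensional complex simple Lie algebra, realised on the
   rational form h*_Q = 'rV[rat]_n of the dual Cartan subalgebra; coroots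
   h_alpha are column vectors (elements of h_Q), pairing lambda(h) = lambda *m h. *)
From HB Require Import structures.
From mathcomp Require Import all_boot all_order all_algebra.
Set Implicit Arguments. Unset Strict Implicit. Unset Printing Implicit Defensive.
Import Order.TTheory GRing.Theory Num.Theory.
Local Open Scope ring_scope.

Section RootSystem.
Variable n : nat.
Notation V := 'rV[rat]_n.
Notation H := 'cV[rat]_n.

Definition pair (lam : V) (h : H) : rat := (lam *m h) 0 0.

Definition refl (hc : V -> H) (a x : V) : V := x - pair x (hc a) *: a.

Definition root_system (R : seq V) (hc : V -> H) : Prop :=
  (0 \notin R) /\
  [/\ (1%:M <= \matrix_(i < size R) nth 0 R i)%MS,
      (forall a, a \in R -> pair a (hc a) = 2),
      (forall a b, a \in R -> b \in R -> refl hc a b \in R),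
      (forall a b, a \in R -> b \in R -> pair b (hc a) \is a Num.int)
    & (forall a (c : rat), a \in R -> c *: a \in R -> c = 1 \/ c = -1)].

Definition irreducible (R : seq V) (hc : V -> H) : Prop :=
  forall A : pred V,
    (forall a b, a \in R -> b \in R -> A a -> ~~ A b -> pair b (hc a) = 0) ->
    (forall a, a \in R -> A a) \/ (forall a, a \in R -> ~~ A a).

(* f is regular: no root vanishes on f; it determines the positive system *)
Definition regular (R : seq V) (f : H) : Prop :=
  forall a, a \in R -> pair a f != 0.

Definition pos_roots (R : seq V) (f : H) : seq V := [seq a <- R | 0 < pair a f].

Definition dominant (R : seq V) (hc : V -> H) (f : H) (lam : V) : Prop :=
  (forall a, a \in R -> pair lam (hc a) \is a Num.int) /\
  (forall a, a \in pos_roots R f -> pair lam (hc a) \is a Num.nat).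

Definition preceq (R : seq V) (hc : V -> H) (f : H) (l1 l2 m1 m2 : V) : Prop :=
  forall a, a \in pos_roots R f ->
    Num.min (pair l1 (hc a)) (pair l2 (hc a))
      <= Num.min (pair m1 (hc a)) (pair m2 (hc a)).

(* Weyl group element s_{a_1} o ... o s_{a_k} given by a word of roots *)
Definition weyl_act (hc : V -> H) (ws : seq V) (x : V) : V :=
  foldr (refl hc) x ws.

End RootSystem.

(* Main.v *)
Require Import Defs.
From HB Require Import structures.
From mathcomp Require Import all_boot all_order all_algebra.
From mathcomp Require Import ring lra.
Import Order.TTheory GRing.Theory Num.Theory.
Local Open Scope ring_scope.

Lemma pairD n (x y : 'rV[rat]_n) h : pair (x + y) h = pair x h + pair y h.
Proof. by rewrite /pair mulmxDl mxE. Qed.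
Lemma pairN n (x : 'rV[rat]_n) h : pair (- x) h = - pair x h.
Proof. by rewrite /pair mulNmx mxE. Qed.
Lemma pairZ n k (x : 'rV[rat]_n) h : pair (k *: x) h = k * pair x h.
Proof. by rewrite /pair -scalemxAl mxE. Qed.
Lemma pairDr n (x : 'rV[rat]_n) h h' : pair x (h + h') = pair x h + pair x h'.
Proof. by rewrite /pair mulmxDr mxE. Qed.
Lemma pairNr n (x : 'rV[rat]_n) h : pair x (- h) = - pair x h.
Proof. by rewrite /pair mulmxN mxE. Qed.
Lemma pairZr n k (x : 'rV[rat]_n) h : pair x (k *: h) = k * pair x h.
Proof. by rewrite /pair -scalemxAr mxE. Qed.

Ltac pexp := rewrite /refl ?(pairD, pairN, pairZ, pairDr, pairNr, pairZr).

Lemma span0 {n} {R : seq 'rV[rat]_n} {hc} (hR : root_system R hc) (d : 'cV[rat]_n) :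
  (forall r, r \in R -> pair r d = 0) -> d = 0.
Proof.
move=> H; case: hR => _ [hsp _ _ _ _].
set M := \matrix_(i < size R) nth 0 R i in hsp.
have HM : M *m d = 0.
  apply/row_matrixP => i; rewrite row_mul rowK row0.
  apply/rowP => j; rewrite ord1 [RHS]mxE; exact: H (mem_nth 0 (ltn_ord i)).
case/submxP: hsp => D hD.
by rewrite -[d]mul1mx hD -mulmxA HM mulmx0.
Qed.

Lemma coroot_unique {n} {R : seq 'rV[rat]_n} {hc} (hR : root_system R hc) c h' :
  c \in R -> pair c h' = 2 -> (forall r, r \in R -> r - pair r h' *: c \in R) ->
  hc c = h'.
Proof.
move=> cR c2 gR.
have [R0 [_ hcc hrefl _ _]] := hR.
apply/eqP; rewrite -subr_eq0; apply/eqP.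
apply: (span0 hR) => r rR.
have cd : pair c (hc c - h') = 0 by rewrite pairDr pairNr hcc // c2 subrr.
have step : forall y, y \in R -> y + pair y (hc c - h') *: c \in R.
  move=> y yR.
  have -> : y + pair y (hc c - h') *: c = refl hc c y - pair (refl hc c y) h' *: c.
    pexp; rewrite c2; apply/rowP => i; rewrite !mxE; ring.
  exact/gR/hrefl.
move: cd step; set d := hc c - h'; clearbody d => cd step.
have it : forall k : nat, r + (k%:R * pair r d) *: c \in R.
  elim=> [|k IH]; first by rewrite mul0r scale0r addr0.
  have := step _ IH.
  have -> : r + (k.+1%:R * pair r d) *: c =
     (r + (k%:R * pair r d) *: c) + pair (r + (k%:R * pair r d) *: c) d *: c.
    rewrite pairD pairZ cd mulr0 addr0 -addrA -scalerDl; congr (_ + _ *: _).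
    by rewrite mulrSr mulrDl mul1r.
  by [].
case: (eqVneq (pair r d) 0) => // nz; exfalso.
have c0 : c != 0 by apply/eqP => ec; move: R0; rewrite -ec cR.
set s := [seq r + (k%:R * pair r d) *: c | k <- iota 0 (size R).+1].
have us : uniq s.
  rewrite map_inj_uniq ?iota_uniq // => k1 k2 /addrI /eqP.
  rewrite -subr_eq0 -scalerBl scaler_eq0 (negbTE c0) orbF subr_eq0 => /eqP /(mulIf nz) /eqP.
  by rewrite eqr_nat => /eqP.
have ss : {subset s <= R} by move=> x /mapP [k _ ->]; apply: it.
by have := uniq_leq_size us ss; rewrite size_map size_iota ltnn.
Qed.

Lemma hc_refl {n} {R : seq 'rV[rat]_n} {hc} (hR : root_system R hc) {c b} :
  c \in R -> b \in R -> hc (refl hc c b) = hc b - pair c (hc b) *: hc c.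
Proof.
move=> cR bR; have [_ [_ hcc hrefl _ _]] := hR.
apply: (coroot_unique hR); first exact: hrefl.
  pexp; rewrite (hcc b bR) (hcc c cR); ring.
move=> r rR.
have -> : r - pair r (hc b - pair c (hc b) *: hc c) *: refl hc c b
   = refl hc c (refl hc b (refl hc c r)).
  pexp; rewrite (hcc c cR); apply/rowP => i; rewrite !mxE; ring.
by apply: (hrefl) => //; apply: (hrefl) => //; apply: (hrefl).
Qed.

Lemma refl_self {n} {R : seq 'rV[rat]_n} {hc} (hR : root_system R hc) {a} :
  a \in R -> refl hc a a = - a.
Proof.
move=> aR; have [_ [_ hcc _ _ _]] := hR.
rewrite /refl hcc //; apply/rowP => i; rewrite !mxE; ring.
Qed.

Lemma hc_neg {n} {R : seq 'rV[rat]_n} {hc} (hR : root_system R hc) {a} :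
  a \in R -> hc (- a) = - hc a.
Proof.
move=> aR; have [_ [_ hcc _ _ _]] := hR.
rewrite -(refl_self hR aR) (hc_refl hR aR aR) hcc //.
apply/colP => i; rewrite !mxE; ring.
Qed.

Lemma pair_refl {n} {R : seq 'rV[rat]_n} {hc} (hR : root_system R hc) {c b z} :
  c \in R -> b \in R -> pair (refl hc c z) (hc b) = pair z (hc (refl hc c b)).
Proof.
move=> cR bR; rewrite (hc_refl hR cR bR); pexp; ring.
Qed.

Lemma refl_invol {n} {R : seq 'rV[rat]_n} {hc} (hR : root_system R hc) {c x} :
  c \in R -> refl hc c (refl hc c x) = x.
Proof.
move=> cR; have [_ [_ hcc _ _ _]] := hR.
pexp; rewrite hcc //; apply/rowP => i; rewrite !mxE; ring.
Qed.

Lemma weylL1 {n} {R : seq 'rV[rat]_n} {hc} (hR : root_system R hc) ws :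
  all (mem R) ws -> forall b, b \in R ->
  exists2 b', b' \in R & forall y, pair (weyl_act hc ws y) (hc b) = pair y (hc b').
Proof.
have [_ [_ _ hrefl _ _]] := hR.
elim: ws => [|c ws IH] /=.
  by move=> _ b bR; exists b.
case/andP => cR wsR b bR.
have [b' b'R Hb'] := IH wsR (refl hc c b) (hrefl c b cR bR).
exists b' => // y.
change (pair (refl hc c (weyl_act hc ws y)) (hc b) = pair y (hc b')).
by rewrite (pair_refl hR cR bR) Hb'.
Qed.

Lemma weylL2 {n} {R : seq 'rV[rat]_n} {hc} (hR : root_system R hc) ws :
  all (mem R) ws -> forall a, a \in R ->
  weyl_act hc ws a \in R /\
  forall y, pair (weyl_act hc ws y) (hc (weyl_act hc ws a)) = pair y (hc a).
Proof.
have [_ [_ _ hrefl _ _]] := hR.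
elim: ws => [|c ws IH] /=.
  by move=> _ a aR; split.
case/andP => cR wsR a aR.
have [WaR HW] := IH wsR a aR.
split; first by change (refl hc c (weyl_act hc ws a) \in R); apply: hrefl.
move=> y.
change (pair (refl hc c (weyl_act hc ws y)) (hc (refl hc c (weyl_act hc ws a)))
  = pair y (hc a)).
by rewrite (pair_refl hR cR (hrefl _ _ cR WaR)) (refl_invol hR cR) HW.
Qed.

Lemma minP (x y u v : rat) : x + y = u + v ->
  (Num.min x y <= Num.min u v) = (0 <= (x - u) * (u - y)).
Proof.
move=> e; have ev : v = x + y - u by rewrite e; ring.
subst v.
have [hxy|hxy] := leP x y; have [huv|huv] := leP u (x + y - u);
  rewrite ?(min_l hxy) ?(min_r (ltW hxy)) ?(min_l huv) ?(min_r (ltW huv));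
  apply/idP/idP => H; nra.
Qed.

Lemma neg_pos {n} {R : seq 'rV[rat]_n} {hc} (hR : root_system R hc) f a :
  regular R f -> a \in R -> a \notin pos_roots R f -> - a \in pos_roots R f.
Proof.
move=> hreg aR; have [_ [_ _ hrefl _ _]] := hR.
rewrite !mem_filter aR andbT => H; apply/andP; split.
  by rewrite pairN oppr_gt0 lt_neqAle (hreg a aR) /= leNgt.
by rewrite -(refl_self hR aR); apply: hrefl.
Qed.

Lemma allR {n} {R : seq 'rV[rat]_n} {hc} (hR : root_system R hc) f (p q : 'rV[rat]_n) :
  regular R f ->
  (forall a, a \in pos_roots R f -> 0 <= pair p (hc a) * pair q (hc a)) <->
  (forall a, a \in R -> 0 <= pair p (hc a) * pair q (hc a)).
Proof.
move=> hreg; split=> H a.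
  move=> aR; case: (boolP (a \in pos_roots R f)) => ap; first exact: H.
  have := H _ (neg_pos hR f _ hreg aR ap).
  by rewrite (hc_neg hR aR) !pairNr mulrNN.
by rewrite mem_filter => /andP [_ aR]; apply: H.
Qed.

Lemma part3 {n} {R : seq 'rV[rat]_n} {hc} (hR : root_system R hc) f
  (p q d : 'rV[rat]_n) ws : regular R f -> all (mem R) ws -> p + q = d ->
  (forall a, a \in R -> pair p (hc a) \is a Num.int) ->
  (forall a, a \in R -> pair q (hc a) \is a Num.int) ->
  dominant R hc f (weyl_act hc ws d) ->
  (forall a, a \in R -> 0 <= pair p (hc a) * pair q (hc a)) <->
  dominant R hc f (weyl_act hc ws p) /\ dominant R hc f (weyl_act hc ws q).
Proof.
move=> hreg wsR epq ip iq [_ dd].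
have domP : forall x y : 'rV[rat]_n, x + y = d ->
    (forall a, a \in R -> pair x (hc a) \is a Num.int) ->
    (forall a, a \in R -> 0 <= pair x (hc a) * pair y (hc a)) ->
    dominant R hc f (weyl_act hc ws x).
  move=> x y exy ix H; split.
    by move=> b bR; have [b' b'R ->] := weylL1 hR ws wsR _ bR; apply: ix.
  move=> b bP; have bR : b \in R by move: bP; rewrite mem_filter => /andP [].
  have [b' b'R Hb] := weylL1 hR ws wsR _ bR.
  rewrite Hb natrEint ix //=.
  have h0 : 0 <= pair d (hc b') by rewrite -(Hb d); apply: natr_ge0; apply: dd.
  have := H b' b'R; move: h0; rewrite -exy pairD => h0 h1; nra.
split.
  move=> H; split; first exact: (domP p q).
  apply: (domP q p); [by rewrite addrC | exact: iq | by move=> a aR; rewrite mulrC; apply: H].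
case=> [[_ Hp] [_ Hq]] a aR.
have [WaR HW] := weylL2 hR ws wsR _ aR.
rewrite -(HW p) -(HW q).
case: (boolP (weyl_act hc ws a \in pos_roots R f)) => bp.
  by apply: mulr_ge0; apply: natr_ge0; [apply: Hp | apply: Hq].
have nb := neg_pos hR f _ hreg WaR bp.
have := natr_ge0 (Hp _ nb); have := natr_ge0 (Hq _ nb).
rewrite (hc_neg hR WaR) !pairNr => h1 h2; nra.
Qed.

Theorem proposition5p1 (n : nat) (R : seq 'rV[rat]_n) (hc : 'rV[rat]_n -> 'cV[rat]_n)
  (f : 'cV[rat]_n) :
  (0 < n)%N -> root_system R hc -> irreducible R hc -> regular R f ->
  forall lam l1 l2 m1 m2 : 'rV[rat]_n,
    dominant R hc f lam ->
    dominant R hc f l1 -> dominant R hc f l2 -> l1 + l2 = lam ->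
    dominant R hc f m1 -> dominant R hc f m2 -> m1 + m2 = lam ->
    [/\ (preceq R hc f l1 l2 m1 m2 <->
           (forall a, a \in pos_roots R f ->
              0 <= pair (l1 - m1) (hc a) * pair (m1 - l2) (hc a))),
        (preceq R hc f l1 l2 m1 m2 <->
           (forall a, a \in R ->
              0 <= pair (l1 - m1) (hc a) * pair (m1 - l2) (hc a)))
      & (forall ws : seq 'rV[rat]_n, all (mem R) ws ->
           dominant R hc f (weyl_act hc ws (l1 - l2)) ->
           (preceq R hc f l1 l2 m1 m2 <->
              dominant R hc f (weyl_act hc ws (l1 - m1)) /\
              dominant R hc f (weyl_act hc ws (m1 - l2))))].
Proof.
move=> _ hR _ hreg lam l1 l2 m1 m2 _ [il1 _] [il2 _] e1 [im1 _] _ e2.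
have key : forall a, (Num.min (pair l1 (hc a)) (pair l2 (hc a))
      <= Num.min (pair m1 (hc a)) (pair m2 (hc a)))
    = (0 <= pair (l1 - m1) (hc a) * pair (m1 - l2) (hc a)).
  move=> a; rewrite !pairD !pairN; apply: minP; by rewrite -!pairD e1 e2.
have P1 : preceq R hc f l1 l2 m1 m2 <->
   (forall a, a \in pos_roots R f ->
      0 <= pair (l1 - m1) (hc a) * pair (m1 - l2) (hc a)).
  by split=> H a aP; [rewrite -key | rewrite key]; apply: H.
have P2 : preceq R hc f l1 l2 m1 m2 <->
   (forall a, a \in R -> 0 <= pair (l1 - m1) (hc a) * pair (m1 - l2) (hc a)).
  rewrite -(allR hR f _ _ hreg); exact: P1.
split => // ws wsR dW.
rewrite P2; apply: (part3 hR f _ _ _ ws hreg wsR _ _ _ dW).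
- by rewrite addrA subrK.
- by move=> a aR; rewrite pairD pairN rpredB ?il1 ?im1.
- by move=> a aR; rewrite pairD pairN rpredB ?il2 ?im1.
Qed.
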